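(* Let $d\ge 0$ and let $G$ be a $d$-manifold with $w(G)=1+(-1)^d$. Then $G$ is Dehn-Sommerville.
   Context: A finite abstract simplicial complex is a finite set of non-empty finite sets closed under taking non-empty subsets. For $x\in G$, $w(x)=(-1)^{|x|-1}$ and $w(A)=\sum_{x\in A}w(x)$. For $x\in G$: $U(x)=\{y\in G: x\subset y\}$, $B(x)=\{y\in G : y\subset z \text{ for some } z\in U(x)\}$, $S(x)=B(x)\setminus U(x)$. A one-point complex $\{\{v\}\}$ is contractible, and $G$ is contractible if there is $x\in G$ with $S(x)$ and $G\setminus U(x)$ both contractible. The empty complex is the $(-1)$-sphere; for $k\ge 0$, $G$ is a $k$-manifold if every unit sphere $S(x)$, $x\in G$, is a $(k-1)$-sphere, and a $k$-sphere if it is a $k$-manifold and $G\setminus U(x)$ is contractible for some $x\in G$. For a complex $G$ of maximal dimension $d=\max_{x\in G}(|x|-1)$, $f_k(G)$ is the number of elements of cardinality $k+1$, $f_G(t)=1+\sum_{k=0}^d f_k(G)t^{k+1}$, and $h_G(x)=(x-1)^{d+1}f_G(1/(x-1))=h_0+h_1x+\cdots+h_{d+1}x^{d+1}$; $G$ is Dehn-Sommerville if $h_i=h_{d+1-i}$ for all $i=0,\dots,d+1$. *)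

(* Defs.v *)
From mathcomp Require Import all_boot all_order all_algebra.
Set Implicit Arguments. Unset Strict Implicit. Unset Printing Implicit Defensive.
Import GRing.Theory Num.Theory.
Local Open Scope ring_scope.

Section Complexes.
Variable T : finType.
Implicit Types (G : {set {set T}}) (x : {set T}).

Definition is_complex G : Prop :=
  set0 \notin G /\
  (forall x y : {set T}, x \in G -> y \subset x -> y != set0 -> y \in G).

Definition wt x : int := (-1) ^+ (#|x|.-1).
Definition wG G : int := \sum_(x in G) wt x.

Definition Ustar G x : {set {set T}} := [set y in G | x \subset y].
Definition Bstar G x : {set {set T}} :=
  [set y in G | [exists z in Ustar G x, y \subset z]].
Definition Sph G x : {set {set T}} := Bstar G x :\: Ustar G x.

Inductive contractible : {set {set T}} -> Prop :=
| contr_point (v : T) : contractible [set [set v]]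
| contr_step G x : x \in G -> contractible (Sph G x) ->
    contractible (G :\: Ustar G x) -> contractible G.

(* sphere_ n G  <->  G is an (n-1)-sphere *)
Fixpoint sphere_ (n : nat) G : Prop :=
  match n with
  | 0 => G = set0
  | n'.+1 => (forall x, x \in G -> sphere_ n' (Sph G x)) /\
             (exists2 x, x \in G & contractible (G :\: Ustar G x))
  end.

Definition manifold (k : nat) G : Prop :=
  forall x, x \in G -> sphere_ k (Sph G x).

(* D = d+1 = max cardinality of a face (0 for the empty complex, i.e. d = -1) *)
Definition dimS G : nat := \max_(x in G) #|x|.

(* f_{k-1}: number of faces of cardinality k, with f_{-1} = 1 *)
Definition fcount G (k : nat) : nat :=
  if k == 0%N then 1%N else #|[set x in G | #|x| == k]|.

(* h_G(x) = (x-1)^(d+1) f_G(1/(x-1)), f_G(t) = sum_k f_{k-1} t^k, expanded *)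
Definition hpoly G : {poly int} :=
  \sum_(k < (dimS G).+1) (fcount G k)%:R *: ('X - 1) ^+ (dimS G - k).

Definition dehn_sommerville G : Prop :=
  forall i : nat, (i <= dimS G)%N -> (hpoly G)`_i = (hpoly G)`_(dimS G - i).

End Complexes.

(* Main.v *)
Require Import Defs.
From mathcomp Require Import all_boot all_order all_algebra.
From mathcomp Require Import ring.
Set Implicit Arguments. Unset Strict Implicit. Unset Printing Implicit Defensive.
Import GRing.Theory Num.Theory.
Local Open Scope ring_scope.

Section Proofs.
Variable T : finType.
Implicit Types (G K : {set {set T}}) (x y z : {set T}).

Lemma inU G x y : (y \in Ustar G x) = (y \in G) && (x \subset y).
Proof. by rewrite /Ustar inE. Qed.

Lemma inB G x y : is_complex G ->
  (y \in Bstar G x) = (y \in G) && (y :|: x \in G).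
Proof.
case=> G0 Gc; rewrite /Bstar inE; case yG: (y \in G) => //=.
apply/existsP/idP => [[w /andP[]]|yxG].
  rewrite inU => /andP[wG xw] yw; apply: (Gc _ _ wG); first by rewrite subUset yw.
  apply/set0Pn; have /set0Pn[a ay] : y != set0 by apply: contraNneq G0 => <-.
  by exists a; rewrite inE ay.
exists (y :|: x); rewrite inU yxG subsetUr subsetUl //.
Qed.

Lemma inS G x y : is_complex G ->
  (y \in Sph G x) = [&& y \in G, y :|: x \in G & ~~ (x \subset y)].
Proof.
move=> cG; rewrite /Sph inE inB // inU.
by case: (y \in G); case: (y :|: x \in G); case: (x \subset y).
Qed.

Lemma complexD G x : is_complex G -> is_complex (G :\: Ustar G x).
Proof.
case=> G0 Gc; split; first by rewrite in_setD negb_and G0 orbT.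
move=> y w; rewrite !in_setD !inU => /andP[xNw wG] yw yn0.
rewrite (Gc _ _ wG yw yn0) andbT /=; rewrite wG /= in xNw.
apply: contra xNw => xy; exact: subset_trans xy yw.
Qed.

Lemma complexS G x : is_complex G -> is_complex (Sph G x).
Proof.
move=> cG; have [G0 Gc] := cG; split; first by rewrite inS // (negbTE G0).
move=> y w; rewrite !inS // => /and3P[wG wxG xNw] yw yn0.
rewrite (Gc _ _ wG yw yn0) /=; apply/andP; split.
  apply: (Gc _ _ wxG); first by rewrite setSU.
  exact: subset_neq0 (subsetUl _ _) yn0.
apply: contra xNw => xy; exact: subset_trans xy yw.
Qed.

Lemma wG_split G K : K \subset G -> wG G = wG (G :\: K) + wG K.
Proof.
move=> KG; rewrite /wG (big_setID K) /= addrC; congr (_ + _).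
by rewrite (setIidPr KG).
Qed.

Lemma apex_sum (R : zmodType) (F E : {set {set T}}) a (f : {set T} -> R) :
  set0 \notin E -> (forall z, z \in E -> a \notin z /\ a |: z \in F) ->
  (forall y, y \in F -> a \in y -> y != [set a] -> y :\ a \in E) ->
  [set a] \in F ->
  \sum_(y in F | a \in y) f y = f [set a] + \sum_(z in E) f (a |: z).
Proof.
move=> E0 hE hF aF.
have eq : [set y in F | a \in y] = [set a] |: ((fun z => a |: z) @: E).
  apply/setP => y; rewrite !inE; apply/idP/idP.
    case/andP => yF ay; case: (eqVneq y [set a]) => //= ya.
    apply/imsetP; exists (y :\ a); first exact: hF.
    by rewrite setD1K.
  case/orP => [/eqP->|/imsetP[z zE ->]]; first by rewrite aF set11.
  by have [_ ->] := hE _ zE; rewrite setU11.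
rewrite (eq_bigl (fun y => y \in [set y in F | a \in y])); last by move=> y; rewrite inE.
rewrite eq big_setU1 /=; last first.
  apply/imsetP => -[z zE za]; have [aNz _] := hE _ zE.
  have : z = set0 by rewrite -(setU1K aNz) -za setDv.
  by move=> z0; move: E0; rewrite -z0 zE.
rewrite big_imset //= => z1 z2 z1E z2E e.
have [a1 _] := hE _ z1E; have [a2 _] := hE _ z2E.
by rewrite -(setU1K a1) e setU1K.
Qed.

Lemma wt_U1 a z : a \notin z -> z != set0 -> wt (a |: z) = - wt z.
Proof.
move=> aNz z0; rewrite /wt cardsU1 aNz.
have : (0 < #|z|)%N by rewrite card_gt0.
by case: #|z| => // n _ /=; rewrite exprS mulN1r.
Qed.

Lemma wB G x : is_complex G -> x \in G -> wG (Bstar G x) = 1.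
Proof.
move=> cG xG; have [G0 Gc] := cG.
have [x0|[a ax]] := set_0Vmem x; first by move: G0; rewrite -x0 xG.
set B := Bstar G x.
have n0 : forall y, y \in G -> y != set0 by move=> y yG; apply: contraNneq G0 => <-.
rewrite /wG (bigID (fun y => a \in y)) /=.
have aB : [set a] \in B.
  rewrite inB // (Gc _ _ xG) ?sub1set //; last by apply/set0Pn; exists a; rewrite inE.
  by rewrite (setUidPr _) // sub1set.
rewrite (@apex_sum _ B [set y in B | a \notin y] a (@wt T)) //; first last.
- move=> y yB ay ya; rewrite inE setD11 andbT.
  move: yB; rewrite !inB // => /andP[yG yxG]; apply/andP; split.
    apply: (Gc _ _ yG); first exact: subD1set.
    apply: contra ya => /eqP e; apply/eqP; apply/setP => b; rewrite inE.
    apply/idP/eqP => [bY|->//]; apply/eqP; apply: contraT => ba.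
    by move: (in_set0 b); rewrite -e !inE ba bY.
  apply: (Gc _ _ yxG); first by rewrite setSU // subD1set.
  apply/set0Pn; exists a; by rewrite inE ax orbT.
- move=> z; rewrite inE => /andP[zB aNz]; split => //.
  move: zB; rewrite !inB // => /andP[zG zxG].
  have e : (a |: z) :|: x = z :|: x.
    apply/setP=> b; rewrite !inE; case: eqP => [->|_] //=; by rewrite ax !orbT.
  rewrite e zxG andbT; apply: (Gc _ _ zxG).
    by rewrite subUset sub1set !inE ax orbT subsetUl.
  by apply/set0Pn; exists a; rewrite !inE eqxx.
- by rewrite inE inB // (negbTE G0).
rewrite /wt cards1 expr0.
have -> : \sum_(i in B | a \notin i) wt i = \sum_(z in [set y in B | a \notin y]) wt z by apply: eq_bigl => y; rewrite inE.
rewrite -addrA -big_split /= big1 ?addr0 // => z; rewrite inE => /andP[zB aNz].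
rewrite -/(wt _) wt_U1 ?addNr //; apply: n0; move: zB; rewrite inB // => /andP[]//.
Qed.

Lemma wU G x : is_complex G -> x \in G -> wG (Ustar G x) = 1 - wG (Sph G x).
Proof.
move=> cG xG; rewrite -(wB cG xG) (@wG_split (Bstar G x) (Ustar G x)).
  by rewrite /Sph addrC addKr.
apply/subsetP => y; rewrite inU inB // => /andP[yG xy]; rewrite yG /=.
by rewrite (setUidPl xy).
Qed.

Lemma contr_w G : contractible G -> is_complex G -> wG G = 1.
Proof.
elim => [v|{}G x xG _ IHS _ IHD] cG.
  by rewrite /wG big_set1 /wt cards1 expr0.
rewrite (@wG_split G (Ustar G x)); last by apply/subsetP => y; rewrite inU => /andP[].
rewrite (IHD (complexD x cG)) (wU cG xG) (IHS (complexS x cG)).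
by rewrite subrr addr0.
Qed.

Lemma sphere_w n K : is_complex K -> sphere_ n K -> wG K = 1 - (-1) ^+ n.
Proof.
elim: n K => [|n IH] K cK /=.
  by move=> ->; rewrite /wG big_set0 expr0 subrr.
case=> HS [x xK Hc].
rewrite (@wG_split K (Ustar K x)); last by apply/subsetP => y; rewrite inU => /andP[].
rewrite (contr_w Hc (complexD x cK)) (wU cK xK) (IH _ (complexS x cK) (HS _ xK)).
rewrite exprS; ring.
Qed.


Definition fp K : {poly int} := 1 + \sum_(y in K) 'X^#|y|.
Definition qp : {poly int} := - ('X + 1).

Lemma qp_deriv : qp^`() = -1.
Proof. by rewrite /qp derivN derivD derivX -polyC1 derivC addr0. Qed.

Lemma fp_m1 K : set0 \notin K -> (fp K).[-1] = 1 - wG K.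
Proof.
move=> K0; rewrite /fp hornerD -polyC1 hornerC horner_sum /wG -sumrN.
congr (_ + _); apply: eq_bigr => y yK; rewrite hornerXn /wt.
have : (0 < #|y|)%N by rewrite card_gt0; apply: contraNneq K0 => <-.
by case: #|y| => // n _; rewrite exprS mulN1r.
Qed.

Lemma fp0 K : set0 \notin K -> (fp K).[0] = 1.
Proof.
move=> K0; rewrite /fp hornerD -polyC1 hornerC horner_sum big1 ?addr0 // => y yK.
rewrite hornerXn expr0n; suff -> : (#|y| == 0%N) = false by [].
apply/negbTE; rewrite -lt0n card_gt0; by apply: contraNneq K0 => <-.
Qed.

Lemma deriv_fp K : is_complex K ->
  (fp K)^`() = \sum_(v : T | [set v] \in K) fp (Sph K [set v]).
Proof.
move=> cK; have [K0 Kc] := cK.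
rewrite /fp derivD -polyC1 derivC add0r raddf_sum /=.
have -> : \sum_(v | [set v] \in K) (1%:P + \sum_(y in Sph K [set v]) 'X^#|y|)
    = \sum_v \sum_(y in K | v \in y) 'X^(#|y|.-1) :> {poly int}.
  rewrite [RHS](bigID (fun v => [set v] \in K)) /= [X in _ = _ + X]big1 ?addr0; last first.
    move=> v vK; apply: big1 => y /andP[yK vy]; case/negP: vK.
    by apply: (Kc _ _ yK); rewrite ?sub1set //; apply/set0Pn; exists v; rewrite inE.
  apply: eq_bigr => v vK.
  rewrite (@apex_sum _ K (Sph K [set v]) v (fun y => 'X^(#|y|.-1))) //.
  - rewrite cards1 /= expr0; congr (_ + _); apply: eq_bigr => z.
    rewrite inS // => /and3P[_ _]; rewrite sub1set => vNz.
    by rewrite cardsU1 vNz.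
  - by rewrite inS // (negbTE K0).
  - move=> z; rewrite inS // sub1set => /and3P[_ zvK vNz]; split => //.
    by rewrite setUC.
  - move=> y yK vy yv; rewrite inS // sub1set setD11 andbT.
    have yn0 : y :\ v != set0.
      apply: contra yv => /eqP e; by rewrite -(setD1K vy) e setU0.
    rewrite (Kc _ _ yK (subD1set _ _) yn0) /= setUC setD1K //.
rewrite (exchange_big_dep (fun y => y \in K)) /=; last by move=> v y _ /andP[].
apply: eq_bigr => y yK; rewrite derivXn.
rewrite (eq_bigl (fun v => v \in y)); last by move=> v; rewrite yK.
by rewrite sumr_const.
Qed.

Lemma deriv_const (p : {poly int}) : p^`() = 0 -> p = (p`_0)%:P.
Proof.
move=> dp; apply/polyP => i; rewrite coefC; case: i => [|i] //=.
have /eqP := congr1 (fun r : {poly int} => r`_i) dp.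
by rewrite coef_deriv coef0 mulrn_eq0 /= => /eqP.
Qed.

Lemma DS_step n K : is_complex K ->
  (forall v, [set v] \in K ->
     fp (Sph K [set v]) \Po qp = (-1) ^+ n *: fp (Sph K [set v])) ->
  wG K = 1 + (-1) ^+ n -> fp K \Po qp = (-1) ^+ n.+1 *: fp K.
Proof.
move=> cK hS wK; have [K0 _] := cK.
set g := fp K \Po qp - (-1) ^+ n.+1 *: fp K.
have dg : g^`() = 0.
  rewrite /g derivB deriv_comp derivZ qp_deriv deriv_fp //.
  rewrite raddf_sum /=.
  rewrite (eq_bigr (fun v => (-1)^+n *: fp (Sph K [set v]))); last by move=> v vK; exact: hS.
  by rewrite -scaler_sumr exprS mulN1r scaleNr mulrN1 opprK addNr.
have g0 : g = 0.
  rewrite (deriv_const dg) -horner_coef0 /g hornerD hornerN hornerZ horner_comp.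
  have -> : qp.[0] = -1 by rewrite /qp hornerN hornerD hornerX -polyC1 hornerC add0r.
  rewrite fp_m1 // fp0 // wK exprS; apply/eqP; rewrite polyC_eq0; apply/eqP; ring.
by apply: subr0_eq.
Qed.

Lemma DS n K : is_complex K -> manifold n K -> wG K = 1 + (-1) ^+ n ->
  fp K \Po qp = (-1) ^+ n.+1 *: fp K.
Proof.
elim: n K => [|m IH] K cK mK wK; apply: (DS_step cK) => // v vK.
  have -> : Sph K [set v] = set0 by exact: (mK _ vK).
  by rewrite /fp big_set0 addr0 -polyC1 comp_polyC expr0 scale1r.
have [HS _] := mK _ vK.
have cS := complexS [set v] cK.
apply: IH => //; rewrite (sphere_w cS (mK _ vK)) exprS; ring.
Qed.

End Proofs.

Section Final.
Variable T : finType.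
Implicit Types (G : {set {set T}}).

Lemma fp_count G : set0 \notin G ->
  fp G = \sum_(k < (dimS G).+1) (fcount G k)%:R *: 'X^k.
Proof.
move=> G0.
have e1 : \sum_(y in G) 'X^#|y| =
    \sum_(k < (dimS G).+1) #|[set y in G | #|y| == k]|%:R *: 'X^k :> {poly int}.
  rewrite [RHS](eq_bigr (fun k : 'I_(dimS G).+1 =>
     \sum_(y | (y \in G) && (#|y| == k)) 'X^k)); last first.
    move=> k _; rewrite scaler_nat -sumr_const; apply: eq_bigl => y; by rewrite inE.
  rewrite (exchange_big_dep (fun y => y \in G)) /=; last by move=> k y _ /andP[].
  apply: eq_bigr => y yG.
  have hy : (#|y| < (dimS G).+1)%N.
    by rewrite ltnS /dimS (@leq_bigmax_cond _ (fun x => x \in G) (fun x : {set T} => #|x|) y yG).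
  rewrite (big_pred1 (Ordinal hy)) //= => k; rewrite yG /= eq_sym.
  by [].
rewrite /fp e1 [RHS](bigD1 ord0) //= [in LHS](bigD1 ord0) //=.
have -> : [set y in G | #|y| == 0%N] = set0.
  apply/setP => y; rewrite !inE cards_eq0; apply/negbTE; rewrite negb_and.
  by case: (eqVneq y set0) => [->|]; rewrite ?G0 ?orbT.
rewrite cards0 scale0r add0r /fcount /= expr0 scale1r; congr (_ + _).
apply: eq_bigr => k /negbTE k0; rewrite -(inj_eq val_inj) /= in k0.
by rewrite k0.
Qed.


Definition hr G : {poly rat} := map_poly (intr : int -> rat) (hpoly G).
Definition revq G : {poly rat} := \poly_(i < (dimS G).+1) (hr G)`_(dimS G - i).
Definition cq G k : rat := (fcount G k)%:R.

Lemma hr_sum G : hr G =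
  \sum_(k < (dimS G).+1) cq G k *: ('X - 1) ^+ (dimS G - k).
Proof.
rewrite /hr /hpoly rmorph_sum; apply: eq_bigr => k _.
by rewrite /= map_polyZ rmorphXn /= rmorphB /= map_polyX rmorph1 rmorph_nat.
Qed.

Lemma hr_horner G y : (hr G).[y] =
  \sum_(k < (dimS G).+1) cq G k * (y - 1) ^+ (dimS G - k).
Proof.
rewrite hr_sum horner_sum; apply: eq_bigr => k _.
by rewrite hornerZ horner_exp hornerD hornerN hornerX -polyC1 hornerC.
Qed.

Lemma size_hr G : (size (hr G) <= (dimS G).+1)%N.
Proof.
rewrite hr_sum; apply: leq_trans (size_sum _ _ _) _.
apply/bigmax_leqP => k _; apply: leq_trans (size_scale_leq _ _) _.
by rewrite -polyC1 size_exp_XsubC ltnS leq_subr.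
Qed.

Lemma Fr_horner G u : set0 \notin G ->
  (map_poly (intr : int -> rat) (fp G)).[u] =
  \sum_(k < (dimS G).+1) cq G k * u ^+ k.
Proof.
move=> G0; rewrite fp_count // rmorph_sum horner_sum; apply: eq_bigr => k _.
by rewrite /= map_polyZ map_polyXn hornerZ hornerXn rmorph_nat.
Qed.

Lemma E1 G (s : int) t : set0 \notin G -> fp G \Po qp = s *: fp G ->
  \sum_(k < (dimS G).+1) cq G k * (- (t + 1)) ^+ k =
  (s%:~R : rat) * \sum_(k < (dimS G).+1) cq G k * t ^+ k.
Proof.
move=> G0 H; have := congr1 (fun p => (map_poly (intr : int -> rat) p).[t]) H.
rewrite /= map_comp_poly horner_comp map_polyZ hornerZ !Fr_horner //.
suff -> : (map_poly (intr : int -> rat) qp).[t] = - (t + 1) by [].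
by rewrite /qp rmorphN /= rmorphD /= map_polyX rmorph1 hornerN hornerD hornerX -polyC1 hornerC.
Qed.

Lemma key G (s : rat) : set0 \notin G ->
  (forall t, \sum_(k < (dimS G).+1) cq G k * (- (t + 1)) ^+ k =
             s * \sum_(k < (dimS G).+1) cq G k * t ^+ k) ->
  forall x : rat, x != 0 -> x != 1 ->
  (-1) ^+ (dimS G) * (revq G).[x] = s * (hr G).[x].
Proof.
move=> G0 H x x0 x1.
set D := dimS G.
have x1' : x - 1 != 0 by rewrite subr_eq0.
have sc : (revq G).[x] = x ^+ D * (hr G).[x^-1].
  rewrite horner_poly (horner_coef_wide _ (size_hr G)) mulr_sumr.
  rewrite [RHS](reindex_inj rev_ord_inj) /=; apply: eq_bigr => i _.
  have iD : (i <= D)%N by rewrite -ltnS.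
  rewrite subSS exprVn.
  have -> : x ^+ i = x ^+ D / x ^+ (D - i).
    by rewrite -exprB ?subKn ?leq_subr ?unitfE.
  by rewrite mulrCA.
have sd : x ^+ D * (hr G).[x^-1] =
    \sum_(k < D.+1) cq G k * (x ^+ k * (1 - x) ^+ (D - k)).
  rewrite hr_horner mulr_sumr; apply: eq_bigr => k _.
  have ex : x ^+ D = x ^+ (D - k) * x ^+ k by rewrite -exprD subnK // -ltnS.
  have e : 1 - x = x * (x^-1 - 1) by rewrite mulrBr mulfV // mulr1.
  rewrite ex e exprMn.
  move: (x ^+ (D - k)) (x ^+ k) ((x^-1 - 1) ^+ (D - k)) => a b y; ring.
have se := congr1 (fun r => (x - 1) ^+ D * r) (H ((x - 1)^-1)).
rewrite /= [RHS]mulrCA [LHS]mulr_sumr [X in _ = _ * X]mulr_sumr in se.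
have lhs : forall k : 'I_D.+1,
    (x - 1) ^+ D * (cq G k * (- ((x - 1)^-1 + 1)) ^+ k) =
    cq G k * ((x - 1) ^+ (D - k) * (- x) ^+ k).
  move=> k; have ex : (x - 1) ^+ D = (x - 1) ^+ (D - k) * (x - 1) ^+ k.
    by rewrite -exprD subnK // -ltnS.
  have e : - x = (x - 1) * (- ((x - 1)^-1 + 1)).
    by rewrite mulrN mulrDr mulfV // mulr1; ring.
  rewrite ex e exprMn.
  move: ((x - 1) ^+ (D - k)) ((x - 1) ^+ k) ((- ((x - 1)^-1 + 1)) ^+ k) => a b y; ring.
have rhs : forall k : 'I_D.+1,
    (x - 1) ^+ D * (cq G k * ((x - 1)^-1) ^+ k) = cq G k * (x - 1) ^+ (D - k).
  move=> k; have ex : (x - 1) ^+ D = (x - 1) ^+ (D - k) * (x - 1) ^+ k.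
    by rewrite -exprD subnK // -ltnS.
  have hb : (x - 1) ^+ k * ((x - 1)^-1) ^+ k = 1 by rewrite -exprMn mulfV // expr1n.
  rewrite ex; transitivity (cq G k * (x - 1) ^+ (D - k) * ((x - 1) ^+ k * ((x - 1)^-1) ^+ k)).
    by move: ((x - 1) ^+ (D - k)) ((x - 1) ^+ k) (((x - 1)^-1) ^+ k) => a b y; ring.
  by rewrite hb mulr1.
rewrite (eq_bigr _ (fun k _ => lhs k)) (eq_bigr _ (fun k _ => rhs k)) in se.
rewrite hr_horner -se sc sd mulr_sumr; apply: eq_bigr => k _.
have ex : (-1) ^+ D = (-1) ^+ (D - k) * (-1) ^+ k :> rat.
  by rewrite -exprD subnK // -ltnS.
have e1 : (- x) ^+ k = (-1) ^+ k * x ^+ k by exact: exprNn.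
have e2 : (x - 1) ^+ (D - k) = (-1) ^+ (D - k) * (1 - x) ^+ (D - k).
  by rewrite -exprNn opprB.
rewrite ex e1 e2.
move: ((-1) ^+ (D - k)) ((-1) ^+ k) (x ^+ k) ((1 - x) ^+ (D - k)) => a b y z; ring.
Qed.

End Final.

Lemma fcount_top (T : finType) (G : {set {set T}}) :
  is_complex G -> fcount G (dimS G) != 0%N.
Proof.
case=> G0 _; rewrite /fcount; case: ifP => [//|/negbT D0].
have [G0e|Gn0] := eqVneq G set0.
  by move: D0; rewrite /dimS G0e big_set0.
have cG : (0 < #|(fun x => x \in G)|)%N.
  by rewrite -(card_gt0 G) in Gn0; exact: Gn0.
have [y yG ey] := @eq_bigmax_cond _ (fun x => x \in G) (fun x : {set T} => #|x|) cG.
rewrite -lt0n card_gt0; apply/set0Pn; exists y; by rewrite inE yG /dimS ey eqxx.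
Qed.

Unset Implicit Arguments.
Set Strict Implicit.

Theorem mainTheorem11 (T : finType) (G : {set {set T}}) (d : nat) :
  is_complex G -> manifold d G -> wG G = 1 + (-1) ^+ d ->
  dehn_sommerville G.
Proof.
move=> cG mG wGe; have [G0 _] := cG.
have HDS := DS cG mG wGe.
have Hk := key G0 (fun t => @E1 _ G _ t G0 HDS).
set s : rat := ((-1) ^+ d.+1 : int)%:~R in Hk.
set P := (-1) ^+ (dimS G) *: revq G - s *: hr G.
have P0 : P = 0.
  apply: (@roots_geq_poly_eq0 _ P [seq (i.+2)%:R | i <- iota 0 (size P)]).
  - apply/allP => r /mapP[i _ ->]; rewrite /root /P hornerD hornerN !hornerZ Hk ?subrr //.
      by rewrite pnatr_eq0.
    by rewrite pnatr_eq1.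
  - rewrite map_inj_uniq ?iota_uniq // => i j /eqP; rewrite eqr_nat => /eqP; by case.
  - by rewrite size_map size_iota.
have r1 : (revq G).[1] = (hr G).[1].
  rewrite horner_poly (horner_coef_wide _ (size_hr G)) (reindex_inj rev_ord_inj) /=.
  apply: eq_bigr => i _; rewrite !expr1n !mulr1 subSS subKn //; by rewrite -ltnS.
have h1 : (hr G).[1] = cq G (dimS G).
  rewrite hr_horner big_ord_recr /= subnn expr0 mulr1 big1 ?add0r // => l _.
  by rewrite subrr expr0n subn_eq0 leqNgt ltn_ord /= mulr0.
have cD : cq G (dimS G) != 0 by rewrite /cq pnatr_eq0 fcount_top.
have hs : (-1) ^+ (dimS G) = s.
  have := congr1 (fun p => p.[1]) P0; rewrite /= /P hornerD hornerN !hornerZ r1 h1 horner0.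
  by move=> /eqP; rewrite subr_eq0 => /eqP; apply: mulIf.
move: P0; rewrite /P -hs -scalerBr => /eqP; rewrite scaler_eq0 signr_eq0 /= subr_eq0.
move=> /eqP Er i iD.
have := congr1 (fun p : {poly rat} => p`_i) Er.
rewrite /= coef_poly ltnS iD /hr !coef_map /= => e.
by apply: (@intr_inj rat); rewrite e.
Qed.
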